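(* Let $X$ be the subshift obtained from the construction described in the context, with unique shift-invariant probability measure $\mu$. Then $(X,\sigma,\mu)$ is rigid with rigidity sequence $(l_n)_{n\in\mathbb{N}}$: for every measurable set $A\subset X$, $\lim_{n\to\infty}\mu(\sigma^{l_n}A\,\triangle\,A) = 0$.
   Context: Construction. Let $l_1$ be a sufficiently large perfect square, $N_1 = 2^{\sqrt{l_1}}$, and let $\mathcal{C}_1$ be a set of $N_1$ binary words of length $l_1$. Inductively, given a set $\mathcal{C}_j$ of $N_j$ distinct words of length $l_j$ with an ordering $\mathcal{C}_j = \{u_1^{(j)},\dots,u_{N_j}^{(j)}\}$, let $P_j = \{2\}\cup\{i^2 : 2 \le i \le \lfloor\sqrt{N_j}\rfloor\}$, and let $\mathcal{C}_{j+1}$ be the set of all words $u^{(j)}_{\pi(1)}\cdots u^{(j)}_{\pi(N_j)}$ where $\pi$ ranges over permutations of $\{1,\dots,N_j\}$ fixing every element outside $P_j$; so $N_{j+1} = (\lfloor\sqrt{N_j}\rfloor)!$ and $l_{j+1} = l_jN_j$. The ordering of $\mathcal{C}_{j+1}$ is arbitrary except that its first element is $u_1^{(j)}u_2^{(j)}\cdots u_{N_j}^{(j)}$. $X\subset\{0,1\}^{\mathbb{Z}}$ is the set of bi-infinite sequences each finite subword of which is a subword of some word in $\bigcup_j\mathcal{C}_j$; it is strictly ergodic. *)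

(* Defs.v *)
From HB Require Import structures.
From mathcomp Require Import all_boot all_order all_algebra all_fingroup.
From mathcomp Require Import all_classical all_reals all_analysis.
Set Implicit Arguments. Unset Strict Implicit. Unset Printing Implicit Defensive.
Import Order.TTheory GRing.Theory Num.Theory.
Local Open Scope classical_set_scope.

(* Bi-infinite binary sequences {0,1}^Z, with 0 = false, 1 = true. *)
Definition bseq := int -> bool.

(* Generators of the product (= Borel) sigma-algebra: the coordinate cylinders. *)
Definition cylinders : set (set bseq) :=
  fun A => exists (i : int) (b : bool), A = [set x : bseq | x i = b].

Definition Omega := g_sigma_algebraType cylinders.

Definition shiftn (n : nat) (x : Omega) : Omega := fun i => x (i + (n%:Z))%R.
Definition shift := shiftn 1.

(* The set P_j of the construction, for N = N_j (1-based positions):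
   P = {2} U {i^2 : 2 <= i <= floor (sqrt N)}; note i <= floor(sqrt N) <-> i*i <= N. *)
Definition Pset (N p : nat) : Prop :=
  p = 2%N \/ exists i : nat, (2 <= i)%N /\ (i * i <= N)%N /\ p = (i * i)%N.

(* The next-level set C_{j+1} built from the ordered list s = (u_1,...,u_N) of C_j:
   all words u_{pi(1)} ... u_{pi(N)} with pi a permutation fixing every element
   outside P (positions are 0-based here: position k corresponds to k+1). *)
Definition next_words (s : seq (seq bool)) (w : seq bool) : Prop :=
  exists pi : {perm 'I_(size s)},
    (forall k : 'I_(size s), ~ Pset (size s) k.+1 -> pi k = k) /\
    w = flatten [seq nth [::] s (pi k) | k <- enum 'I_(size s)].

(* C : nat -> seq (seq bool) gives, for each j >= 1, the ordered list C_j
   (C 0 is unused).  is_construction l1 C says C is an instance of the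
   construction with first length l1. *)
Definition is_construction (l1 : nat) (C : nat -> seq (seq bool)) : Prop :=
  (exists r : nat, l1 = (r * r)%N /\ size (C 1%N) = (2 ^ r)%N) /\
  uniq (C 1%N) /\ (forall w, w \in C 1%N -> size w = l1) /\
  forall j : nat, (1 <= j)%N ->
    uniq (C j.+1) /\ (forall w, w \in C j.+1 <-> next_words (C j) w) /\
    head [::] (C j.+1) = flatten (C j).

Definition wlen (C : nat -> seq (seq bool)) (j : nat) : nat := size (head [::] (C j)).

Definition subword (x : bseq) (a : int) (k : nat) : seq bool :=
  [seq x (a + (i%:Z))%R | i <- iota 0 k].

Definition subshiftX (C : nat -> seq (seq bool)) : set Omega :=
  [set x | forall (a : int) (k : nat), exists j w,
      (1 <= j)%N /\ w \in C j /\ infix (subword x a k) w].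

Definition invariant_on {R : realType} (mu : probability Omega R) (X : set Omega) : Prop :=
  mu X = 1%E /\ forall A : set Omega, measurable A -> mu (shift @^-1` A) = mu A.

Definition symdiff {T} (A B : set T) : set T := (A `\` B) `|` (B `\` A).

(* Main.v *)
Require Import Defs.
From HB Require Import structures.
From mathcomp Require Import all_boot all_order all_algebra all_fingroup.
From mathcomp Require Import all_classical all_reals all_analysis.
From mathcomp Require Import measurable_realfun.
From mathcomp Require Import zify ring lra.
Import Order.TTheory GRing.Theory Num.Theory.
Local Open Scope classical_set_scope.
Set Implicit Arguments. Unset Strict Implicit. Unset Printing Implicit Defensive.
Definition ham (u v : seq bool) := count (fun p => p.1 != p.2) (zip u v).

Lemma zip_drop' (t : nat) (a b : seq bool) : drop t (zip a b) = zip (drop t a) (drop t b).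
Proof.
elim: t a b => [|t IH] [|x a] [|y b] //=; rewrite ?drop0 //.
- by case: (drop _ _).
- by case: (drop _ _).
Qed.

Lemma zip_take' (t : nat) (a b : seq bool) : take t (zip a b) = zip (take t a) (take t b).
Proof.
elim: t a b => [|t IH] [|x a] [|y b] //=; by rewrite IH.
Qed.

Lemma ham_cat a b c d : size a = size c -> ham (a ++ b) (c ++ d) = ham a c + ham b d.
Proof. by move=> h; rewrite /ham zip_cat // count_cat. Qed.

Lemma ham_le a b : ham a b <= size a.
Proof. rewrite /ham (leq_trans (count_size _ _)) // size_zip; exact: geq_minl. Qed.

Lemma ham_drop t a b : ham (drop t a) (drop t b) <= ham a b.
Proof.
rewrite /ham -zip_drop' -{2}(cat_take_drop t (zip a b)) count_cat; exact: leq_addl.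
Qed.

Lemma ham_take t a b : ham (take t a) (take t b) <= ham a b.
Proof.
rewrite /ham -zip_take' -{2}(cat_take_drop t (zip a b)) count_cat; exact: leq_addr.
Qed.

Lemma ham_refl a : ham a a = 0.
Proof. by elim: a => //= x a; rewrite /ham /= eqxx. Qed.

Lemma size_flatten_const (L : nat) (bs : seq (seq bool)) :
  (forall b, b \in bs -> size b = L) -> size (flatten bs) = size bs * L.
Proof.
elim: bs => //= b bs IH h; rewrite size_cat IH ?h ?mem_head ?mulSn //.
by move=> c cb; apply: h; rewrite inE cb orbT.
Qed.
Fixpoint Lz (l1 : nat) (C : nat -> seq (seq bool)) (k : nat) : nat :=
  match k with 0 => l1 | k'.+1 => Lz l1 C k' * size (C k) end.

Lemma nw_of l1 C (hC : is_construction l1 C) k w :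
  w \in C k.+2 -> next_words (C k.+1) w.
Proof.
case: hC => _ [_ [_ h]]; have [_ [/(_ w) [H _] _]] := h k.+1 isT; exact: H.
Qed.

Lemma nw_to l1 C (hC : is_construction l1 C) k w :
  next_words (C k.+1) w -> w \in C k.+2.
Proof.
case: hC => _ [_ [_ h]]; have [_ [/(_ w) [_ H] _]] := h k.+1 isT; exact: H.
Qed.

Lemma C_uniq l1 C (hC : is_construction l1 C) k : uniq (C k.+1).
Proof.
case: hC => _ [u1 [_ h]]; case: k => // k; by have [-> _] := h k.+1 isT.
Qed.

Lemma C_head l1 C (hC : is_construction l1 C) k : head [::] (C k.+2) = flatten (C k.+1).
Proof. case: hC => _ [_ [_ h]]; by have [_ [_ ->]] := h k.+1 isT. Qed.

Lemma Csize l1 C (hC : is_construction l1 C) k w :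
  w \in C k.+1 -> size w = Lz l1 C k.
Proof.
elim: k w => [|k IH] w.
  by case: hC => _ [_ [h _]]; apply: h.
move=> /(nw_of hC) [pi [_ ->]].
rewrite (@size_flatten_const (Lz l1 C k)).
  rewrite size_map size_enum_ord mulnC; reflexivity.
move=> b /mapP [i _ ->]; apply: IH; apply: mem_nth; exact: ltn_ord.
Qed.

Lemma wlenE l1 C (hC : is_construction l1 C) k : wlen C k.+2 = Lz l1 C k.+1.
Proof.
rewrite /wlen (C_head hC) (@size_flatten_const (Lz l1 C k)).
  rewrite mulnC; reflexivity.
exact: Csize.
Qed.
Lemma flat_all l1 C (hC : is_construction l1 C) n (ws : seq (seq bool)) k :
  (forall w, w \in ws -> w \in C (k + n).+1) ->
  (forall w, w \in C (k + n).+1 -> exists bs, all (fun b => b \in C n.+1) bs /\ w = flatten bs) ->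
  exists bs, all (fun b => b \in C n.+1) bs /\ flatten ws = flatten bs.
Proof.
move=> hw IH; elim: ws hw => [|w ws IHw] hw; first by exists [::].
change (flatten (w :: ws)) with (w ++ flatten ws).
have [bs [hbs ->]] := IH w (hw w (mem_head _ _)).
have hw' : forall v, v \in ws -> v \in C (k + n).+1.
  by move=> v hv; apply: hw; rewrite inE hv orbT.
have [cs [hcs ->]] := IHw hw'.
by exists (bs ++ cs); rewrite all_cat hbs hcs flatten_cat.
Qed.

Lemma Cflat l1 C (hC : is_construction l1 C) n k w :
  w \in C (k + n).+1 -> exists bs, all (fun b => b \in C n.+1) bs /\ w = flatten bs.
Proof.
elim: k w => [|k IH] w.
  by move=> hw; exists [:: w]; rewrite /= hw cats0.
rewrite addSn => /(nw_of hC) [pi [_ ->]].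
apply: (flat_all hC); last exact: IH.
move=> v /mapP [i _ ->]; apply: mem_nth; exact: ltn_ord.
Qed.
Definition Psetb (N p : nat) : bool :=
  (p == 2) || has (fun i => (2 <= i) && (i * i <= N) && (p == i * i)) (iota 0 N.+1).

Lemma PsetP N p : Pset N p <-> Psetb N p.
Proof.
split.
  case=> [->|[i [h2 [hN ->]]]]; first by rewrite /Psetb eqxx.
  apply/orP; right; apply/hasP; exists i; last by rewrite h2 hN eqxx.
  rewrite mem_iota add0n ltnS; apply: leq_trans hN; exact: leq_pmulr (leq_trans _ h2).
case/orP=> [/eqP ->|/hasP [i _ /andP [/andP [h2 hN] /eqP ->]]]; first by left.
by right; exists i.
Qed.

Definition Pfin (N : nat) : {set 'I_N} := [set i : 'I_N | Psetb N i.+1].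

Lemma ham_flat (I : Type) (E : seq I) (f g : I -> seq bool) :
  (forall i, size (f i) = size (g i)) ->
  ham (flatten (map f E)) (flatten (map g E)) = \sum_(i <- E) ham (f i) (g i).
Proof.
move=> hs; elim: E => [|i E IH]; first by rewrite big_nil.
change (flatten (map f (i :: E))) with (f i ++ flatten (map f E)).
change (flatten (map g (i :: E))) with (g i ++ flatten (map g E)).
by rewrite ham_cat // IH big_cons.
Qed.

Lemma ham_bound l1 C (hC : is_construction l1 C) k u v :
  u \in C k.+2 -> v \in C k.+2 ->
  ham u v <= #|Pfin (size (C k.+1))| * Lz l1 C k.
Proof.
move=> /(nw_of hC) [pi [hpi ->]] /(nw_of hC) [pi' [hpi' ->]].
set s := C k.+1.
have hsz : forall j : 'I_(size s), size (nth [::] s j) = Lz l1 C k.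
  move=> j; apply: (Csize hC); apply: mem_nth; exact: ltn_ord.
rewrite ham_flat; last by move=> i; rewrite !hsz.
rewrite -sum_nat_const big_enum /=.
rewrite [X in X <= _]big_mkcond [X in _ <= X]big_mkcond /=.
apply: leq_sum => i _.
rewrite !inE /=; case: ifP => hP.
  by rewrite -(hsz (pi i)) ham_le.
have nP : ~ Pset (size s) i.+1 by move/PsetP; rewrite hP.
by rewrite hpi // hpi' // ham_refl.
Qed.
Lemma Pfin_card_le N m : N < m.+1 * m.+1 -> #|Pfin N| <= m.+2.
Proof.
move=> hN.
pose S := 1 :: [seq i * i - 1 | i <- iota 0 m.+1].
have -> : m.+2 = size S by rewrite /= size_map size_iota.
rewrite cardE -(size_map val).
apply: uniq_leq_size; first by rewrite (map_inj_uniq val_inj) enum_uniq.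
move=> x /mapP [i]; rewrite mem_enum inE => hi ->.
rewrite -[val i]/(nat_of_ord i).
case/orP: hi => [/eqP [->]|/hasP [j _ /andP [/andP [h2 hjN] /eqP hij]]].
  exact: mem_head.
rewrite inE; apply/orP; right; apply/mapP; exists j.
  rewrite mem_iota add0n ltnS; nia.
by rewrite -hij subn1.
Qed.

Lemma Pfin_card_ge N m : 2 <= m -> m * m <= N -> m <= #|Pfin N|.
Proof.
move=> hm hN.
pose S := 1 :: [seq j * j - 1 | j <- iota 2 (m - 1)].
have -> : m = size S by rewrite /= size_map size_iota; lia.
rewrite cardE -(size_map val).
apply: uniq_leq_size.
  rewrite /S /= map_inj_in_uniq ?iota_uniq ?andbT.
    apply/mapP => [[j]]; rewrite mem_iota => hj; lia.
  move=> x y; rewrite !mem_iota => hx hy; nia.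
move=> x; rewrite inE => /orP [/eqP ->|/mapP [j]].
  have h1 : 1 < N by nia.
  apply/mapP; exists (Ordinal h1) => //; rewrite mem_enum inE /Psetb /=.
  done.
rewrite mem_iota => hj ->.
have h1 : j * j - 1 < N by nia.
apply/mapP; exists (Ordinal h1) => //; rewrite mem_enum inE /Psetb /=.
apply/orP; right; apply/hasP; exists j.
  rewrite mem_iota; nia.
apply/andP; split; first (apply/andP; split; nia).
apply/eqP; nia.
Qed.
Lemma flat_inj (I : Type) (E : seq I) (f g : I -> seq bool) :
  (forall i, size (f i) = size (g i)) ->
  flatten (map f E) = flatten (map g E) -> map f E = map g E.
Proof.
move=> hs; elim: E => [|i E IH] //.
change (flatten (map f (i :: E))) with (f i ++ flatten (map f E)).
change (flatten (map g (i :: E))) with (g i ++ flatten (map g E)).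
move/eqP; rewrite eqseq_cat // => /andP [/eqP h1 /eqP /IH h2].
change (f i :: map f E = g i :: map g E); by rewrite h1 h2.
Qed.

Lemma grow l1 C (hC : is_construction l1 C) k :
  (#|Pfin (size (C k.+1))|)`! <= size (C k.+2).
Proof.
set s := C k.+1; set N := size s.
pose F (pi : {perm 'I_N}) := flatten [seq nth [::] s (pi i) | i <- enum 'I_N].
have hsz : forall j : 'I_N, size (nth [::] s j) = Lz l1 C k.
  move=> j; apply: (Csize hC); apply: mem_nth; exact: ltn_ord.
rewrite -card_perm cardE -(size_map F).
apply: uniq_leq_size.
  rewrite map_inj_in_uniq ?enum_uniq // => p q _ _ /flat_inj h.
  have hs2 : forall i : 'I_N, size (nth [::] s (p i)) = size (nth [::] s (q i)).
    by move=> i; rewrite !hsz.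
  have {}h := h hs2.
  apply/permP => i.
  have hi : i \in enum 'I_N by rewrite mem_enum.
  have := (proj2 (eq_in_map _ _ _) h) i hi.
  move/eqP; rewrite nth_uniq ?ltn_ord ?(C_uniq hC) // => /eqP; exact: val_inj.
move=> w /mapP [p]; rewrite mem_enum => hp ->.
apply: (nw_to hC); exists p; split => // i hi.
apply: (out_perm hp); rewrite inE; apply/negP => /PsetP; exact: hi.
Qed.
Lemma sqrt_ex N : exists m, m * m <= N < m.+1 * m.+1.
Proof.
elim: N => [|N [m /andP [h1 h2]]]; first by exists 0.
case: (ltnP N.+1 (m.+1 * m.+1)) => h3.
  by exists m; rewrite h3 andbT; lia.
exists m.+1; apply/andP; split; nia.
Qed.

Lemma fact_big m : 5 <= m -> m.+1 * m.+1 <= m`!.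
Proof.
elim: m => // m IH; rewrite leq_eqVlt => /orP [/eqP <-|h] //.
rewrite factS; have := IH h; nia.
Qed.

Lemma Ngrow l1 C (hC : is_construction l1 C) : 25 <= l1 ->
  forall k, k + 25 <= size (C k.+1).
Proof.
move=> hl; elim => [|k IH].
  case: hC => [[r [hr hs]] _]; rewrite add0n hs.
  have hr5 : 5 <= r by nia.
  apply: leq_trans (leq_pexp2l (isT : 0 < 2) hr5); done.
have [m /andP [h1 h2]] := sqrt_ex (size (C k.+1)).
have hm : 5 <= m by nia.
have h3 := Pfin_card_ge (leq_trans (isT : 2 <= 5) hm) h1.
have h4 := leq_trans (leq_fact h3) (grow hC k).
have h5 := fact_big hm.
rewrite addSn; apply: leq_ltn_trans IH _.
apply: leq_trans h2 _; exact: leq_trans h5 h4.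
Qed.
Lemma ham_nil_r a : ham a [::] = 0.
Proof. by case: a. Qed.

Lemma window_core (l B : nat) (bs : seq (seq bool)) o :
  (forall b, b \in bs -> size b = l) ->
  (forall b b', b \in bs -> b' \in bs -> ham b b' <= B) ->
  o + l + l <= size (flatten bs) ->
  ham (take l (drop o (flatten bs))) (take l (drop (o + l) (flatten bs))) <= B + B.
Proof.
elim: bs o => [|b bs IH] o hsz hB.
  move=> h; have -> : l = 0 by move: h; rewrite /=; lia.
  by rewrite !take0.
change (flatten (b :: bs)) with (b ++ flatten bs).
have hb : size b = l by apply: hsz; exact: mem_head.
have hsz' : forall c, c \in bs -> size c = l by move=> c hc; apply: hsz; rewrite inE hc orbT.
have hB' : forall c c', c \in bs -> c' \in bs -> ham c c' <= B.
  by move=> c c' hc hc'; apply: hB; rewrite inE ?hc ?hc' orbT.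
rewrite size_cat hb => hl.
case: (leqP l o) => hlo.
  rewrite !drop_cat hb ltnNge hlo /= ltnNge (leq_trans hlo (leq_addr _ _)) /=.
  have -> : o + l - l = (o - l) + l by lia.
  apply: IH => //; lia.
rewrite !drop_cat hb hlo /= ltnNge leq_addl /= addnK.
case: bs IH hsz hB hsz' hB' hl => [|b' bs] _ hsz hB hsz' hB' hl.
  move: hl; rewrite /=; lia.
change (flatten (b' :: bs)) with (b' ++ flatten bs).
have hb' : size b' = l by apply: hsz'; exact: mem_head.
rewrite drop_cat hb' hlo.
rewrite take_cat size_drop hb.
have -> : (l < l - o) = false by lia.
have -> : l - (l - o) = o by lia.
rewrite take_cat hb' hlo.
rewrite [X in ham _ X]take_cat size_drop hb'.
have -> : (l < l - o) = false by lia.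
have -> : l - (l - o) = o by lia.
rewrite ham_cat; last by rewrite !size_drop hb hb'.
apply: leq_add.
  apply: leq_trans (ham_drop _ _ _) _; apply: hB; first exact: mem_head.
  by rewrite inE mem_head orbT.
clear hsz hB.
case: bs hsz' hB' hl => [|b'' bs] hsz' hB' hl.
  have -> : take o (flatten [::]) = [::] :> seq bool by case: o {hlo hl}.
  by rewrite ham_nil_r.
change (flatten (b'' :: bs)) with (b'' ++ flatten bs).
have hb'' : size b'' = l by apply: hsz'; rewrite inE mem_head orbT.
rewrite take_cat hb'' hlo.
apply: leq_trans (ham_take _ _ _) _; apply: hB'; first exact: mem_head.
by rewrite inE mem_head orbT.
Qed.
Lemma subword_split (x : Omega) (L : nat) :
  subword x 0 (L + L) = subword x 0 L ++ subword x L%:Z L.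
Proof.
rewrite /subword iotaD map_cat.
have -> : iota (0 + L) L = map (addn L) (iota 0 L) by rewrite add0n -iotaDl addn0.
rewrite -map_comp; congr (_ ++ _).
Qed.

Lemma Lz_pos l1 C (hC : is_construction l1 C) (hl : 25 <= l1) k : 0 < Lz l1 C k.
Proof.
elim: k => [|k IH] /=; first by apply: leq_trans hl.
rewrite muln_gt0 IH /=; have := Ngrow hC hl k; lia.
Qed.

Lemma Lz_mono l1 C (hC : is_construction l1 C) (hl : 25 <= l1) k k' :
  k <= k' -> Lz l1 C k <= Lz l1 C k'.
Proof.
elim: k' => [|k' IH]; first by rewrite leqn0 => /eqP ->.
rewrite leq_eqVlt => /orP [/eqP ->|h] //.
apply: leq_trans (IH h) _; rewrite [Lz _ _ k'.+1]/=.
apply: leq_pmulr; have := Ngrow hC hl k'; lia.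
Qed.

Lemma window_X l1 C (hC : is_construction l1 C) (hl : 25 <= l1) k (x : Omega) :
  subshiftX C x ->
  ham (subword x 0 (Lz l1 C k.+1)) (subword x (Lz l1 C k.+1)%:Z (Lz l1 C k.+1))
   <= #|Pfin (size (C k.+1))| * Lz l1 C k + #|Pfin (size (C k.+1))| * Lz l1 C k.
Proof.
set L := Lz l1 C k.+1.
move=> /(_ 0%R (L + L)) [j [w [hj [hw hinf]]]].
have hsw := size_infix hinf.
rewrite /subword size_map size_iota in hsw.
case: j hj hw hsw => // j _ hw hsw.
case: (leqP j k) => hjk.
  have h1 := Csize hC hw.
  have h2 := Lz_mono hC hl hjk.
  have h3 : Lz l1 C k < L.
    rewrite /L [Lz _ _ k.+1]/=; have := Ngrow hC hl k; have := Lz_pos hC hl k; nia.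
  have h4 := Lz_pos hC hl k; lia.
have hjk' : j = (j - k.+1) + k.+1 by lia.
rewrite hjk' in hw.
have [bs [hbs hwbs]] := Cflat hC hw.
move: hinf; rewrite subword_split => /infixP [p [q hpq]].
have hbsz : forall b, b \in bs -> size b = L.
  by move=> b hb; apply: (Csize hC); move/allP: hbs; apply.
have hbB : forall b b', b \in bs -> b' \in bs ->
    ham b b' <= #|Pfin (size (C k.+1))| * Lz l1 C k.
  by move=> b b' hb hb'; apply: (ham_bound hC); move/allP: hbs; apply.
have hs1 : size (subword x 0 L) = L by rewrite size_map size_iota.
have hs2 : size (subword x L%:Z L) = L by rewrite size_map size_iota.
have := window_core (o := size p) hbsz hbB.
rewrite -hwbs hpq -catA drop_size_cat // take_size_cat //.
rewrite [size p + L]addnC -drop_drop drop_size_cat // drop_size_cat // take_size_cat //.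
move=> H; apply: H; rewrite !size_cat hs1 hs2 [L + size p]addnC -!addnA !leq_add2l; exact: leq_addr.
Qed.
Definition shiftz (z : int) (x : Omega) : Omega := fun i => x (i + z)%R.

Lemma cyl_meas (i : int) (b : bool) : measurable [set x : Omega | x i = b].
Proof. apply: sub_sigma_algebra; by exists i, b. Qed.

Lemma subword_cons (x : Omega) a k : subword x a k.+1 = x a :: subword x (a + 1)%R k.
Proof.
rewrite /subword /= addr0; congr (_ :: _).
have -> : iota 1 k = map (addn 1) (iota 0 k) by rewrite -iotaDl addn0.
rewrite -map_comp; apply: eq_map => i /=; congr x.
by rewrite PoszD addrA.
Qed.

Lemma subword_meas (Q : seq bool -> Prop) a k :
  measurable [set x : Omega | Q (subword x a k)].
Proof.
elim: k Q a => [|k IH] Q a.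
  have [hQ|hQ] := pselect (Q [::]).
    have -> : [set x : Omega | Q (subword x a 0)] = setT.
      by apply/seteqP; split => x //= _.
    exact: measurableT.
  have -> : [set x : Omega | Q (subword x a 0)] = set0.
    by apply/seteqP; split => x //=.
  exact: measurable0.
have -> : [set x : Omega | Q (subword x a k.+1)] =
  ([set x : Omega | x a = true] `&` [set x : Omega | Q (true :: subword x (a + 1)%R k)]) `|`
  ([set x : Omega | x a = false] `&` [set x : Omega | Q (false :: subword x (a + 1)%R k)]).
  apply/seteqP; split => x /=; rewrite subword_cons.
    by case: (x a) => h; [left|right].
  by case=> [[-> h]|[-> h]].
apply: measurableU; apply: measurableI; try exact: cyl_meas.
  exact: (IH (fun s => Q (true :: s))).
exact: (IH (fun s => Q (false :: s))).
Qed.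
Lemma X_meas C : measurable (subshiftX C).
Proof.
pose F (n : nat) : set Omega :=
  match @unpickle (int * nat)%type n with
  | Some p => [set x : Omega | exists j w, (1 <= j)%N /\ w \in C j /\ infix (subword x p.1 p.2) w]
  | None => setT end.
have -> : subshiftX C = \bigcap_n F n.
  apply/seteqP; split => x /=.
    move=> hx n _; rewrite /F; case: (unpickle n) => [[a k]|] //=.
  move=> hx a k; have := hx (pickle (a, k)) I; by rewrite /F pickleK.
apply: bigcapT_measurable => n; rewrite /F; case: (unpickle n) => [[a k]|].
  exact: (subword_meas (fun s => exists j w, (1 <= j)%N /\ w \in C j /\ infix s w)).
exact: measurableT.
Qed.

Lemma shiftz_mfun z : measurable_fun setT (shiftz z).
Proof.
apply: (@measurability _ _ _ _ setT (shiftz z) cylinders) => //.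
move=> _ [B [i [b ->]] <-]; rewrite setTI.
exact: (cyl_meas (i + z)%R b).
Qed.

Lemma shiftz_pre_meas z (A : set Omega) : measurable A -> measurable (shiftz z @^-1` A).
Proof. by move=> mA; have := shiftz_mfun z measurableT mA; rewrite setTI. Qed.

Lemma shiftzK z (x : Omega) : shiftz z (shiftz (- z) x) = x.
Proof. by apply/funext => i; rewrite /shiftz -addrA addrN addr0. Qed.

Lemma shiftzK' z (x : Omega) : shiftz (- z) (shiftz z x) = x.
Proof. by apply/funext => i; rewrite /shiftz -addrA addNr addr0. Qed.

Lemma shiftz_img z (A : set Omega) : shiftz z @` A = shiftz (- z) @^-1` A.
Proof.
apply/seteqP; split => y /=.
  by move=> [x hx <-]; rewrite shiftzK'.
by move=> hy; exists (shiftz (- z) y) => //; rewrite shiftzK.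
Qed.

Lemma inv_nat (R : realType) (mu : probability Omega R) (X : set Omega) :
  invariant_on mu X -> forall n (A : set Omega), measurable A ->
  mu (shiftz n%:Z @^-1` A) = mu A.
Proof.
move=> [_ hinv]; elim=> [|n IH] A mA.
  have -> : shiftz 0%:Z @^-1` A = A.
    by apply/seteqP; split => x /=; rewrite /shiftz; have -> : (fun i => x (i + 0%:Z)%R) = x by apply/funext => i; rewrite addr0.
  by [].
have -> : shiftz n.+1%:Z @^-1` A = Defs.shift @^-1` (shiftz n%:Z @^-1` A).
  apply/seteqP; split => x /=; have -> : shiftz n%:Z (Defs.shift x) = shiftz n.+1%:Z x; try done.
  - by apply/funext => i; rewrite /shiftz /Defs.shift /shiftn -addrA -PoszD addn1.
  - by apply/funext => i; rewrite /shiftz /Defs.shift /shiftn -addrA -PoszD addn1.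
rewrite hinv ?IH //; exact: shiftz_pre_meas.
Qed.

Lemma inv_int (R : realType) (mu : probability Omega R) (X : set Omega) :
  invariant_on mu X -> forall z (A : set Omega), measurable A ->
  mu (shiftz z @^-1` A) = mu A.
Proof.
move=> hI [n|n] A mA; first exact: inv_nat hI n A mA.
set B := shiftz (Negz n) @^-1` A.
have -> : A = shiftz n.+1%:Z @^-1` B.
  apply/seteqP; split => x /=; rewrite /B /=.
    have -> : Negz n = (- n.+1%:Z)%R by rewrite NegzE.
    by rewrite shiftzK.
  have -> : Negz n = (- n.+1%:Z)%R by rewrite NegzE.
  by rewrite shiftzK.
rewrite (inv_nat hI) //; exact: shiftz_pre_meas.
Qed.
Lemma ham_map (f g : nat -> bool) (s : seq nat) :
  count (fun p => p.1 != p.2) (zip (map f s) (map g s)) = count (fun i => f i != g i) s.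
Proof. by elim: s => //= i s ->. Qed.

Lemma ham_sub (x : Omega) (L : nat) :
  ham (subword x 0 L) (subword x (Posz L) L) =
  count (fun i => x (0 + i%:Z)%R != x ((Posz L) + i%:Z)%R) (iota 0 L).
Proof. exact: ham_map. Qed.

Local Open Scope ereal_scope.

Lemma sum_indic (R : realType) (F : nat -> set Omega) (P : nat -> bool) (x : Omega) (s : seq nat) :
  (forall i, F i x <-> P i) ->
  \sum_(i <- s) (((\1_(F i))%R x)%:E : \bar R) = ((count P s)%:R)%:E.
Proof.
move=> hFP; elim: s => [|i s IH]; first by rewrite big_nil.
rewrite big_cons IH /= indicE natrD EFinD; congr (_ + _).
have -> : (x \in F i) = P i.
  apply/idP/idP; [by rewrite inE => /hFP | by move/hFP; rewrite inE].
by case: (P i).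
Qed.

Lemma avg_bound (R : realType) (mu : probability Omega R) (X : set Omega) (L c : nat) :
  invariant_on mu X -> measurable X -> (0 < L)%N ->
  (forall x, X x -> (ham (subword x 0 L) (subword x (Posz L) L) <= c)%N) ->
  mu [set x : Omega | x 0%R != x (Posz L)] <= (c%:R / L%:R)%:E.
Proof.
move=> hI mX hL hc.
set F0 := [set x : Omega | x 0%R != x (Posz L)].
have mF0 : measurable F0.
  have -> : F0 = [set x : Omega | (fun s => nth false s 0 != nth false s L) (subword x 0%R L.+1)].
    apply/seteqP; split => x /=; rewrite /subword !(nth_map 0%N) ?size_iota // !nth_iota //;
      rewrite !add0r add0n //.
  exact: (subword_meas (fun s => nth false s 0 != nth false s L) 0%R L.+1).
pose F (i : nat) := shiftz (Posz i) @^-1` F0.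
have mFi : forall i, measurable (F i) by move=> i; exact: shiftz_pre_meas.
have hFi : forall i, mu (F i) = mu F0 by move=> i; exact: (inv_int hI).
have hX1 : mu X = 1 by case: hI.
have hXc : mu (~` X) = 0 by rewrite probability_setC // hX1 subee.
have hFX : forall i, mu (F i `&` X) = mu (F i).
  move=> i; apply/eqP; rewrite eq_le; apply/andP; split.
    apply: le_measure; rewrite ?inE //; first exact: measurableI.

  apply: (@le_trans _ _ (mu ((F i `&` X) `|` ~` X))).
    apply: le_measure; rewrite ?inE //.
      apply: measurableU; [exact: measurableI|exact: measurableC].
    move=> x hx /=; have [hxX|hxX] := pselect (X x); [by left | by right].
  rewrite measureU0 //; [exact: measurableI | exact: measurableC].
have mind : forall i, measurable_fun X (EFin \o ((\1_(F i))%R : Omega -> R)).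
  move=> i; apply: (proj2 (measurable_EFinP X ((\1_(F i))%R : Omega -> R))).
  exact: measurable_indic.
have key : \sum_(0 <= i < L) mu F0 <= (c%:R)%:E.
  rewrite (eq_bigr (fun i => \int[mu]_(x in X) ((\1_(F i))%R x)%:E)); last first.
    move=> i _; rewrite integral_indic //; symmetry; exact: (etrans (hFX i) (hFi i)).
  rewrite -ge0_integral_sum //.
  apply: (@le_trans _ _ (\int[mu]_(x in X) (cst (c%:R)%:E) x)).
    apply: ge0_le_integral => //.
    - by move=> x _; apply: sume_ge0 => i _; rewrite lee_fin indicE.
    - exact: emeasurable_sum.
    move=> x hx; rewrite (@sum_indic R F (fun i => x (0 + i%:Z)%R != x (Posz L + i%:Z)%R)) //.
    rewrite lee_fin ler_nat /index_iota subn0 -ham_sub; exact: hc.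
  have h : ((c%:R)%:E * mu X = (c%:R)%:E) by rewrite hX1 mule1.
  rewrite integral_cst // le_eqVlt; apply/orP; left; apply/eqP; exact: h.
have hge : 0 <= mu F0 by exact: measure_ge0.
have hle : mu F0 <= 1 by exact: probability_le1.
move: key hge hle; case: (mu F0) => [r| |] key hge hle //.
move: key; rewrite sumEFin lee_fin sumr_const_nat subn0 => key.
rewrite lee_fin ler_pdivlMr ?ltr0n // mulr_natr; exact: key.
Qed.
Local Open Scope ereal_scope.

Lemma ecvg0_le (R : realType) (u : nat -> \bar R) :
  u @ \oo --> 0 -> forall e : R, (0 < e)%R -> \forall n \near \oo, u n <= e%:E.
Proof.
move=> /fine_cvgP [hfin hc] e he.
have hd := (proj1 (cvgrPdist_le _ _)) hc e he.
near=> n.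
have hf : u n \is a fin_num.
  near: n; exact: hfin.
have hn : (`|0 - fine (u n)| <= e)%R.
  near: n; exact: hd.
rewrite -(fineK hf) lee_fin; move: hn; rewrite sub0r normrN => hn.
exact: le_trans (ler_norm _) hn.
Unshelve. all: end_near.
Qed.

Lemma ecvg0_of_le (R : realType) (u : nat -> \bar R) :
  (forall n, 0 <= u n) ->
  (forall e : R, (0 < e)%R -> \forall n \near \oo, u n <= e%:E) -> u @ \oo --> 0.
Proof.
move=> h0 hle; apply/fine_cvgP; split.
  apply: filterS (hle 1%R ltr01) => n h1.
  by rewrite ge0_fin_numE //; apply: le_lt_trans h1 _; exact: ltry.
apply/cvgrPdist_le => e he.
apply: filterS (hle e he) => n hn.
have hf : u n \is a fin_num.
  by rewrite ge0_fin_numE //; apply: le_lt_trans hn _; exact: ltry.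
rewrite sub0r normrN /= ger0_norm; last by rewrite -lee_fin (fineK hf).
by rewrite -lee_fin (fineK hf).
Qed.
Definition Sh (ln : nat -> nat) (n : nat) (A : set Omega) : set Omega :=
  shiftz (- (Posz (ln n)))%R @^-1` A.

Definition rigidP (R : realType) (mu : probability Omega R) (ln : nat -> nat) (A : set Omega) : Prop :=
  measurable A /\ forall e : R, (0 < e)%R ->
    \forall n \near \oo, mu (symdiff (Sh ln n A) A) <= e%:E.

Lemma Sh_meas ln n A : measurable A -> measurable (Sh ln n A).
Proof. exact: shiftz_pre_meas. Qed.

Lemma sd_meas (A B : set Omega) : measurable A -> measurable B -> measurable (symdiff A B).
Proof. by move=> mA mB; apply: measurableU; apply: measurableD. Qed.

Lemma rigid0 R mu ln : @rigidP R mu ln set0.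
Proof.
split; first exact: measurable0.
move=> e he; exists 0%N => // n _ /=.
have -> : symdiff (Sh ln n set0) set0 = set0.
  by apply/seteqP; split => x //= [[]|[]].
by rewrite measure0 lee_fin ltW.
Qed.

Lemma rigidC R mu ln A : @rigidP R mu ln A -> @rigidP R mu ln (setT `\` A).
Proof.
move=> [mA hA]; split; first exact: measurableD.
move=> e he; apply: filterS (hA e he) => n /=.
have -> : symdiff (Sh ln n (setT `\` A)) (setT `\` A) = symdiff (Sh ln n A) A.
  apply/seteqP; split => x /=; rewrite /symdiff /Sh /=;
  case: (pselect (A x)); case: (pselect (A (shiftz (- Posz (ln n))%R x))); tauto.
done.
Qed.
Lemma sd_U ln n (A B : set Omega) :
  symdiff (Sh ln n (A `|` B)) (A `|` B) `<=` symdiff (Sh ln n A) A `|` symdiff (Sh ln n B) B.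
Proof.
move=> x; rewrite /symdiff /Sh /=.
set y := shiftz (- Posz (ln n))%R x.
case: (pselect (A x)); case: (pselect (B x)); case: (pselect (A y)); case: (pselect (B y)); tauto.
Qed.

Lemma rigidU R mu ln A B : @rigidP R mu ln A -> @rigidP R mu ln B -> @rigidP R mu ln (A `|` B).
Proof.
move=> [mA hA] [mB hB]; split; first exact: measurableU.
move=> e he; have he2 : (0 < e / 2)%R by rewrite divr_gt0.
have hA2 := hA _ he2; have hB2 := hB _ he2.
case: hA2 => N1 _ hN1; case: hB2 => N2 _ hN2.
exists (maxn N1 N2) => // n /= hn.
have h1 : mu (symdiff (Sh ln n A) A) <= (e / 2)%:E.
  apply: hN1; rewrite /=; exact: leq_trans (leq_maxl _ _) hn.
have h2 : mu (symdiff (Sh ln n B) B) <= (e / 2)%:E.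
  apply: hN2; rewrite /=; exact: leq_trans (leq_maxr _ _) hn.
have msd : forall C, measurable C -> measurable (symdiff (Sh ln n C) C).
  by move=> C mC; apply: sd_meas => //; exact: Sh_meas.
apply: (@le_trans _ _ (mu (symdiff (Sh ln n A) A `|` symdiff (Sh ln n B) B))).
  apply: le_measure; rewrite ?inE.
  - by apply: msd; apply: measurableU.
  - by apply: measurableU; apply: msd.
  - exact: sd_U.
apply: le_trans.
  by apply: measureU2; apply: msd.
apply: le_trans (leeD h1 h2) _.
rewrite -EFinD lee_fin; lra.
Qed.
Lemma rigid_bigcup R mu ln (X0 : set Omega) (hI : invariant_on mu X0) (A : nat -> set Omega) :
  (forall k, @rigidP R mu ln (A k)) -> @rigidP R mu ln (\bigcup_k A k).
Proof.
move=> hA.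
pose B (K : nat) := \bigcup_(k in [set k | (k < K)%N]) A k.
have hB0 : B 0%N = set0 by apply/seteqP; split => x //= [k].
have hBS : forall K, B K.+1 = B K `|` A K.
  move=> K; apply/seteqP; split => x /=.
    move=> [k /= hk hx]; rewrite ltnS leq_eqVlt in hk; case/orP: hk => [/eqP <-|hk].
      by right.
    by left; exists k.
  case=> [[k /= hk hx]|hx]; first by exists k => //=; rewrite ltnS ltnW.
  by exists K => //=.
have rB : forall K, @rigidP R mu ln (B K).
  elim=> [|K IH]; first by rewrite hB0; exact: rigid0.
  rewrite hBS; exact: rigidU.
have mA : forall k, measurable (A k) by move=> k; case: (hA k).
set U := \bigcup_k A k.
have mU : measurable U by exact: bigcupT_measurable.
have hBU : forall K, B K `<=` U by move=> K x [k _ hx]; exists k.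
pose T K := U `\` B K.
have mT : forall K, measurable (T K) by move=> K; apply: measurableD => //; case: (rB K).
split => // e he.
have he3 : (0 < e / 3)%R by rewrite divr_gt0.
have hcvg : (mu \o T) @ \oo --> mu (\bigcap_n T n).
  apply: nonincreasing_cvg_mu => //.
  - apply: le_lt_trans (probability_le1 _ (mT 0%N)) _; exact: ltry.
  - exact: bigcapT_measurable.
  - move=> m n hmn; rewrite subsetEset => x [hU hB]; split => // hB'; apply: hB.
    case: hB' => k /= hk hx; exists k => //=; exact: leq_trans hk hmn.
have hcap : \bigcap_n T n = set0.
  apply/seteqP; split => x //= hx.
  have [hU _] := hx 0%N I; case: hU => k _ hk.
  have [_ hB] := hx k.+1 I; apply: hB; exists k => //=.
rewrite hcap measure0 in hcvg.
case: (ecvg0_le hcvg he3) => K0 _ hK0.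
have hTK : mu (T K0) <= (e / 3)%:E by apply: hK0; rewrite /=.
case: (rB K0) => mBK /(_ _ he3) [N _ hN].
exists N => // n /= hn.
have h1 : mu (symdiff (Sh ln n (B K0)) (B K0)) <= (e / 3)%:E by exact: hN.
have hST : mu (Sh ln n (T K0)) = mu (T K0) by exact: (inv_int hI).
have msd : forall C, measurable C -> measurable (symdiff (Sh ln n C) C).
  by move=> C mC; apply: sd_meas => //; exact: Sh_meas.
apply: (@le_trans _ _ (mu (symdiff (Sh ln n (B K0)) (B K0) `|` (Sh ln n (T K0) `|` T K0)))).
  apply: le_measure; rewrite ?inE.
  - exact: msd.
  - apply: measurableU; first exact: msd.
    apply: measurableU => //; exact: Sh_meas.
  - move=> x; rewrite /symdiff /Sh /T /=.
    set y := shiftz (- Posz (ln n))%R x.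
    have h1' := @hBU K0 x; have h2' := @hBU K0 y.
    case: (pselect (B K0 x)); case: (pselect (B K0 y)); case: (pselect (U x)); case: (pselect (U y)); tauto.
apply: le_trans.
  apply: measureU2; first exact: msd.
  apply: measurableU => //; exact: Sh_meas.
apply: (@le_trans _ _ ((e / 3)%:E + ((e / 3)%:E + (e / 3)%:E))).
  apply: leeD => //.
  apply: le_trans.
    apply: measureU2 => //; exact: Sh_meas.
  have h3 : mu (Sh ln n (T K0)) <= (e / 3)%:E by rewrite hST.
  apply: leeD; [exact: h3 | exact: hTK].
by rewrite -!EFinD lee_fin; lra.
Qed.
Lemma rigid_all R mu ln (X0 : set Omega) (hI : invariant_on mu X0) :
  (forall (i : int) (b : bool), @rigidP R mu ln [set x : Omega | x i = b]) ->
  forall A : set Omega, measurable A -> @rigidP R mu ln A.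
Proof.
move=> hcyl A mA.
have H : <<s cylinders >> `<=` @rigidP R mu ln.
  apply: smallest_sub.
    split.
    - exact: rigid0.
    - move=> B hB; exact: rigidC.
    - move=> F hF; exact: (rigid_bigcup hI).
  by move=> _ [i [b ->]]; exact: hcyl.
exact: H.
Qed.

Lemma cyl_sd ln n (i : int) (b : bool) :
  symdiff (Sh ln n [set x : Omega | x i = b]) [set x : Omega | x i = b] `<=`
  shiftz (i - Posz (ln n))%R @^-1` [set x : Omega | x 0%R != x (Posz (ln n))].
Proof.
move=> x; rewrite /symdiff /Sh /shiftz /=.
rewrite add0r [(Posz (ln n) + _)%R]addrC subrK.
by case=> [[-> h]|[-> h]]; apply/eqP => h'; apply: h; rewrite h'.
Qed.

Lemma ratio_nat l1 C (hC : is_construction l1 C) (hl : (25 <= l1)%N) (M k : nat) :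
  (1 <= M)%N -> (M.+1 * M.+1 <= k)%N ->
  ((#|Pfin (size (C k.+1))| * Lz l1 C k + #|Pfin (size (C k.+1))| * Lz l1 C k) * M
     <= 6 * Lz l1 C k.+1)%N.
Proof.
move=> hM hk.
have hN := Ngrow hC hl k.
have [m /andP [h1 h2]] := sqrt_ex (size (C k.+1)).
have hP := Pfin_card_le h2.
have hMm : (M <= m)%N by nia.
have hm : (1 <= m)%N by lia.
set P := #|Pfin (size (C k.+1))| in hP *.
set N := size (C k.+1) in hN h1 h2 hP *.
have key : (2 * P * M <= 6 * N)%N by nia.
rewrite [Lz _ _ k.+1]/= -/N.
have := leq_mul key (leqnn (Lz l1 C k)).
set Lk := Lz l1 C k; clearbody Lk P N; nia.
Qed.
Lemma cyl_rigid l1 C (hC : is_construction l1 C) (hl : (25 <= l1)%N)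
  (R : realType) (mu : probability Omega R) (hI : invariant_on mu (subshiftX C)) (i : int) (b : bool) :
  @rigidP R mu (wlen C) [set x : Omega | x i = b].
Proof.
split; first exact: cyl_meas.
move=> e he.
have he6 : (0 <= 6 / e)%R by rewrite divr_ge0 // ltW.
set M := Num.Def.archi_bound (6 / e).
have hM : (6 / e < M%:R)%R := archi_boundP he6.
have hM1 : (1 <= M)%N.
  rewrite lt0n; apply/eqP => hM0; move: hM; rewrite hM0 /= ltNge; move/negP; apply.
  exact: he6.
exists (M.+1 * M.+1).+2 => // n /= hn.
have [k [-> hk]] : exists k, n = k.+2 /\ (M.+1 * M.+1 <= k)%N.
  exists (n - 2)%N; split; lia.
set L := Lz l1 C k.+1.
have hL : wlen C k.+2 = L by exact: wlenE.
have hLpos : (0 < L)%N by exact: Lz_pos.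
have mF : measurable [set x : Omega | x 0%R != x (Posz L)].
  have -> : [set x : Omega | x 0%R != x (Posz L)] =
    [set x : Omega | (fun s => nth false s 0 != nth false s L) (subword x 0%R L.+1)].
    apply/seteqP; split => x /=; rewrite /subword !(nth_map 0%N) ?size_iota // !nth_iota //;
      rewrite !add0r add0n //.
  exact: (subword_meas (fun s => nth false s 0 != nth false s L) 0%R L.+1).
apply: (@le_trans _ _ (mu (shiftz (i - Posz L)%R @^-1` [set x : Omega | x 0%R != x (Posz L)]))).
  apply: le_measure; rewrite ?inE.
  - apply: sd_meas; [apply: Sh_meas; exact: cyl_meas | exact: cyl_meas].
  - exact: (shiftz_pre_meas (i - Posz L)%R mF).
  - have := @cyl_sd (wlen C) k.+2 i b; rewrite hL; exact.
have h1 : mu (shiftz (i - Posz L)%R @^-1` [set x : Omega | x 0%R != x (Posz L)]) =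
          mu [set x : Omega | x 0%R != x (Posz L)] by exact: (inv_int hI).
apply: (@le_trans _ _ (mu [set x : Omega | x 0%R != x (Posz L)])).
  by rewrite le_eqVlt; apply/orP; left; apply/eqP; exact: h1.
have hc : forall x : Omega, subshiftX C x ->
    (ham (subword x 0 L) (subword x (Posz L) L) <=
     #|Pfin (size (C k.+1))| * Lz l1 C k + #|Pfin (size (C k.+1))| * Lz l1 C k)%N.
  by move=> x hx; exact: window_X.
apply: le_trans (avg_bound hI (X_meas C) hLpos hc) _.
rewrite lee_fin ler_pdivrMr ?ltr0n //.
have hnat := ratio_nat hC hl hM1 hk.
set c := (#|Pfin (size (C k.+1))| * Lz l1 C k + #|Pfin (size (C k.+1))| * Lz l1 C k)%N in hnat *.
have hR : (c%:R * M%:R <= 6 * L%:R :> R)%R.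
  by rewrite -natrM -(natrM R 6) ler_nat.
have hM' : (6 <= e * M%:R)%R.
  by move: hM; rewrite ltr_pdivrMr // mulrC => /ltW.
have hLR : (0 <= L%:R :> R)%R by exact: ler0n.
have hMR : (0 < M%:R :> R)%R by rewrite ltr0n.
nra.
Qed.

Local Close Scope ereal_scope.

Theorem mainTheorem10 :
  exists L0 : nat, forall (l1 : nat) (C : nat -> seq (seq bool)),
    (L0 <= l1)%N -> is_construction l1 C ->
    forall (R : realType) (mu : probability Omega R),
      invariant_on mu (subshiftX C) ->
      forall A : set Omega, measurable A -> A `<=` subshiftX C ->
        (fun n : nat => mu (symdiff (shiftn (wlen C n) @` A) A)) @ \oo --> 0%E.
Proof.
exists 25%N => l1 C hl hC R mu hI A mA _.
have rA : @rigidP R mu (wlen C) A.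
  apply: (rigid_all hI) => // i b; exact: (cyl_rigid hC hl hI).
apply: ecvg0_of_le; first by move=> n; exact: measure_ge0.
move=> e he; case: rA => _ /(_ e he) [N _ hN].
exists N => // n /= hn.
have -> : shiftn (wlen C n) @` A = Sh (wlen C) n A.
  exact: (shiftz_img (Posz (wlen C n)) A).
exact: hN.
Qed.
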